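(* For every nonnegative integer $r$, $$\sum_{n=1}^{\infty}\frac{n}{(2n+2r+3)(2n-1)^2(2n+1)(2n+3)}\frac{\binom{2n}{n}}{\binom{2n+2r+2}{n+r+1}}=\frac{1}{2^{2r+2}}\left(\frac{8\wp(2r+4)-8\wp(2r+2)+3\wp(2r)}{128}+\frac{6}{128(4+2r)}-\frac{3}{128(2+2r)}\right),$$ where $\wp(q)=\int_0^{\pi/2} z\sin^q z\,\mathrm{d}z$. *)

(* Defs.v *)
From Stdlib Require Import Reals.
From Coquelicot Require Import Coquelicot.
Open Scope R_scope.

Definition wp (q : nat) : R := RInt (fun z => z * (sin z) ^ q) 0 (PI / 2).

Definition summand (r n : nat) : R :=
  INR n /
    ((2 * INR n + 2 * INR r + 3) * (2 * INR n - 1) ^ 2 * (2 * INR n + 1) * (2 * INR n + 3))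
  * (Binomial.C (2 * n)%nat n / Binomial.C (2 * n + 2 * r + 2)%nat (n + r + 1)%nat).

(* Main.v *)
Require Import Defs.
From Stdlib Require Import Reals Lra Lia.
From Coquelicot Require Import Coquelicot.
Open Scope R_scope.
Lemma lin2 (f g : R -> R) a b u v (ef : is_RInt f a b u) (eg: is_RInt g a b v) (al be : R) :
  is_RInt (fun x => al * f x + be * g x) a b (al*u + be*v).
Proof.
  apply (is_RInt_ext (fun x => plus (scal al (f x)) (scal be (g x)))).
  { intros; reflexivity. }
  exact (is_RInt_plus _ _ _ _ _ _ (is_RInt_scal _ _ _ _ _ ef) (is_RInt_scal _ _ _ _ _ eg)).
Qed.

Lemma uniqI (f : R -> R) a b u v : is_RInt f a b u -> is_RInt f a b v -> u = v.
Proof. intros H1 H2. rewrite <- (is_RInt_unique _ _ _ _ H1). exact (is_RInt_unique _ _ _ _ H2). Qed.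

Lemma wp_is q : is_RInt (fun z => z * (sin z) ^ q) 0 (PI / 2) (wp q).
Proof.
  unfold wp. apply (RInt_correct (V:=R_CompleteNormedModule)), ex_RInt_continuous. intros z _.
  apply (ex_derive_continuous (K:=R_AbsRing) (V:=R_NormedModule)). auto_derive. auto.
Qed.

Lemma wp_rec q : INR (S (S q)) * wp (S (S q)) = INR (S q) * wp q + / INR (S (S q)).
Proof.
  assert (Hq : INR (S (S q)) <> 0) by (apply not_0_INR; lia).
  set (F := fun z => - z * cos z * sin z ^ (S q) + sin z ^ (S (S q)) / INR (S (S q))).
  assert (H := is_RInt_derive F
      (fun z => INR (S (S q)) * (z * sin z ^ (S (S q))) + (- INR (S q)) * (z * sin z ^ q)) 0 (PI/2)).
  assert (H2 := lin2 _ _ _ _ _ _ (wp_is (S (S q))) (wp_is q) (INR (S (S q))) (- INR (S q))).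
  assert (E : F (PI/2) - F 0 = / INR (S (S q))).
  { unfold F. rewrite cos_PI2, sin_PI2, sin_0, !pow1. simpl pow. field. exact Hq. }
  assert (U : INR (S (S q)) * wp (S (S q)) + - INR (S q) * wp q = / INR (S (S q))).
  { apply (uniqI _ _ _ _ _ H2). replace (/ INR (S (S q))) with (minus (F (PI/2)) (F 0)) by (rewrite <- E; reflexivity). apply H.
    - intros z _. unfold F. auto_derive. auto.
      change (match q with | 0%nat => 1 | S _ => INR q + 1 end) with (INR (S q)).
      rewrite !S_INR. 
      pose proof (sin2_cos2 z) as Hs. unfold Rsqr in Hs.
      replace (cos z) with (cos z) by ring. 
      assert (Hq1 : INR q + 1 + 1 <> 0) by (rewrite <- !S_INR; exact Hq).
      field_simplify; [|exact Hq1].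
      replace (cos z ^ 2) with (1 - sin z ^ 2) by nra.
      replace (sin z ^ S (S q)) with (sin z ^ 2 * sin z ^ q) by (simpl; ring). ring.
    - intros z _. apply (ex_derive_continuous (K:=R_AbsRing) (V:=R_NormedModule)). auto_derive. auto. }
  lra.
Qed.
Lemma exI (f : R -> R) a b : (forall x, ex_derive f x) -> is_RInt f a b (RInt f a b).
Proof.
  intros H. apply (RInt_correct (V:=R_CompleteNormedModule)), ex_RInt_continuous.
  intros z _. apply (ex_derive_continuous (K:=R_AbsRing) (V:=R_NormedModule)). apply H.
Qed.

Lemma int_id2 (F f g : R -> R) (a b al be c u v : R) :
  is_RInt f a b u -> is_RInt g a b v ->
  (forall x, is_derive F x (al * f x + be * g x)) ->
  (forall x, ex_derive (fun x => al * f x + be * g x) x) ->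
  F b - F a = c -> al * u + be * v = c.
Proof.
  intros Hf Hg HF Hc E.
  apply (uniqI _ _ _ _ _ (lin2 _ _ _ _ _ _ Hf Hg al be)).
  replace c with (minus (F b) (F a)) by (rewrite <- E; reflexivity).
  apply (is_RInt_derive (V:=R_CompleteNormedModule)). intros; apply HF.
  intros x _. apply (ex_derive_continuous (K:=R_AbsRing) (V:=R_NormedModule)). apply Hc.
Qed.

Definition Aw (n : nat) : R := RInt (fun x => cos x ^ (2 * n)) 0 (PI / 2).
Definition Bw (n : nat) : R := RInt (fun x => x ^ 2 * cos x ^ (2 * n)) 0 (PI / 2).

Lemma Aw_is n : is_RInt (fun x => cos x ^ (2 * n)) 0 (PI / 2) (Aw n).
Proof. apply exI. intros; auto_derive; auto. Qed.
Lemma Bw_is n : is_RInt (fun x => x ^ 2 * cos x ^ (2 * n)) 0 (PI / 2) (Bw n).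
Proof. apply exI. intros; auto_derive; auto. Qed.

Lemma Aw_rec n : INR (2 * n + 2) * Aw (S n) + (- INR (2 * n + 1)) * Aw n = 0.
Proof.
  apply (int_id2 (fun x => sin x * cos x ^ (S (2 * n))) _ _ _ _ _ _ _ _ _ (Aw_is (S n)) (Aw_is n)).
  - intros x. auto_derive; auto.
    replace (2 * S n)%nat with (S (S (2 * n))) by lia.
    change (match (n + (n + 0))%nat with | 0%nat => 1 | S _ => INR (n + (n + 0)) + 1 end) with (INR (S (n + (n + 0)))).
    replace (n + (n + 0))%nat with (2 * n)%nat by lia.
    rewrite !S_INR, !plus_INR, !mult_INR. simpl INR.
    pose proof (sin2_cos2 x) as Hs. unfold Rsqr in Hs. simpl pow.
    ring_simplify. replace (sin x ^ 2) with (1 - cos x ^ 2) by nra. ring.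
  - intros x; auto_derive; auto.
  - rewrite cos_PI2, sin_0. simpl. ring.
Qed.

Lemma lin3 (f g h : R -> R) a b u v w (ef : is_RInt f a b u) (eg: is_RInt g a b v) (eh : is_RInt h a b w) (al be ga : R) :
  is_RInt (fun x => al * f x + be * g x + ga * h x) a b (al*u + be*v + ga * w).
Proof.
  apply (is_RInt_ext (fun x => plus (plus (scal al (f x)) (scal be (g x))) (scal ga (h x)))).
  { intros; reflexivity. }
  exact (is_RInt_plus _ _ _ _ _ _ (is_RInt_plus _ _ _ _ _ _ (is_RInt_scal _ _ _ _ _ ef) (is_RInt_scal _ _ _ _ _ eg)) (is_RInt_scal _ _ _ _ _ eh)).
Qed.

Lemma int_id3 (F f g h : R -> R) (a b al be ga c u v w : R) :
  is_RInt f a b u -> is_RInt g a b v -> is_RInt h a b w ->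
  (forall x, is_derive F x (al * f x + be * g x + ga * h x)) ->
  (forall x, ex_derive (fun x => al * f x + be * g x + ga * h x) x) ->
  F b - F a = c -> al * u + be * v + ga * w = c.
Proof.
  intros Hf Hg Hh HF Hc E.
  apply (uniqI _ _ _ _ _ (lin3 _ _ _ _ _ _ _ _ Hf Hg Hh al be ga)).
  replace c with (minus (F b) (F a)) by (rewrite <- E; reflexivity).
  apply (is_RInt_derive (V:=R_CompleteNormedModule)). intros; apply HF.
  intros x _. apply (ex_derive_continuous (K:=R_AbsRing) (V:=R_NormedModule)). apply Hc.
Qed.

Lemma AB_rec n : 1 * Aw (S n) + (2 * INR (S n) ^ 2) * Bw (S n) + (- (INR (S n) * INR (2 * n + 1))) * Bw n = 0.
Proof.
  apply (int_id3 (fun x => x * cos x ^ (S (S (2 * n))) + INR (S n) * (x ^ 2 * sin x * cos x ^ (S (2 * n))))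
     _ _ _ _ _ _ _ _ _ _ _ _ (Aw_is (S n)) (Bw_is (S n)) (Bw_is n)).
  - intros x. auto_derive; auto.
    replace (2 * S n)%nat with (S (S (2 * n))) by lia.
    change (match (n + (n + 0))%nat with | 0%nat => 1 | S _ => INR (n + (n + 0)) + 1 end) with (INR (S (n + (n + 0)))).
    replace (n + (n + 0))%nat with (2 * n)%nat by lia.
    change (match n with | 0%nat => 1 | S _ => INR n + 1 end) with (INR (S n)).
    rewrite !S_INR, !plus_INR, !mult_INR. simpl INR.
    pose proof (sin2_cos2 x) as Hs. unfold Rsqr in Hs. simpl pow.
    ring_simplify. replace (sin x ^ 2) with (1 - cos x ^ 2) by nra. ring.
  - intros x; auto_derive; auto.
  - rewrite cos_PI2, sin_0. simpl. ring.
Qed.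

Lemma PI2_le2 : PI / 2 <= 2.
Proof. pose proof PI_4. lra. Qed.

Lemma x_le_3sin x : 0 <= x <= PI / 2 -> x <= 3 * sin x.
Proof.
  intros [H0 H1]. pose proof PI2_le2. pose proof PI_RGT_0.
  destruct (SIN x H0 ltac:(lra)) as [Hl _].
  unfold sin_lb, sin_approx, sin_term in Hl. cbn [sum_f_R0] in Hl.
  rewrite !INR_IZR_INZ in Hl.
  replace (Z.of_nat (Factorial.fact (2 * 0 + 1))) with 1%Z in Hl by reflexivity.
  replace (Z.of_nat (Factorial.fact (2 * 1 + 1))) with 6%Z in Hl by reflexivity.
  replace (Z.of_nat (Factorial.fact (2 * 2 + 1))) with 120%Z in Hl by reflexivity.
  replace (Z.of_nat (Factorial.fact (2 * 3 + 1))) with 5040%Z in Hl by reflexivity.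
  simpl pow in Hl.
  assert (Hk : x - x^3/6 + x^5/120 - x^7/5040 <= sin x) by (simpl pow; lra).
  assert (Hy : x * x <= 4) by nra.
  assert (H2b : 0 <= x * (2/3 - x*x/6)) by (apply Rmult_le_pos; lra).
  assert (H3b : 0 <= x^5 * (42 - x*x)) by (apply Rmult_le_pos; [apply pow_le; lra | lra]).
  assert (x / 3 <= x - x^3/6 + x^5/120 - x^7/5040) by (simpl pow in *; lra).
  lra.
Qed.

Lemma Aw0 : Aw 0 = PI / 2.
Proof.
  assert (H := int_id2 (fun x => x) _ _ 0 (PI/2) 1 0 (PI/2) _ _ (Aw_is 0) (Aw_is 0)).
  rewrite <- H. ring.
  - intros x. auto_derive; auto. simpl. ring.
  - intros x; auto_derive; auto.
  - ring.
Qed.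

Lemma Bw0 : Bw 0 = PI ^ 3 / 24.
Proof.
  assert (H := int_id2 (fun x => x ^ 3 / 3) _ _ 0 (PI/2) 1 0 (PI^3/24) _ _ (Bw_is 0) (Bw_is 0)).
  rewrite <- H. ring.
  - intros x. auto_derive; auto. simpl. field.
  - intros x; auto_derive; auto.
  - field.
Qed.

Lemma Aw_S n : Aw (S n) = INR (2 * n + 1) / INR (2 * n + 2) * Aw n.
Proof.
  pose proof (Aw_rec n). assert (INR (2 * n + 2) <> 0) by (apply not_0_INR; lia).
  field_simplify_eq; auto. lra.
Qed.

Lemma Aw_pos n : 0 < Aw n.
Proof.
  induction n.
  - rewrite Aw0. pose proof PI_RGT_0. lra.
  - rewrite Aw_S. apply Rmult_lt_0_compat; auto.
    apply Rdiv_lt_0_compat; apply lt_0_INR; lia.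
Qed.

Lemma Bw_bounds n : 0 <= Bw n <= 9 * Aw n / INR (2 * n + 2).
Proof.
  assert (HP := PI_RGT_0).
  assert (Hc : forall x, 0 <= cos x ^ (2 * n)) by (intros; rewrite pow_mult; apply pow_le, pow2_ge_0).
  split.
  - assert (E0 : RInt (fun _ : R => 0) 0 (PI/2) = 0) by (rewrite RInt_const; apply (scal_zero_r (K:=R_Ring) (V:=R_ModuleSpace))).
    rewrite <- E0. unfold Bw.
    apply RInt_le. lra. apply ex_RInt_const. exists (Bw n); apply Bw_is.
    intros x _. apply Rmult_le_pos; auto. apply pow2_ge_0.
  - assert (HI := lin2 _ _ _ _ _ _ (Aw_is n) (Aw_is (S n)) 9 (-9)).
    assert (E : 9 * Aw n + -9 * Aw (S n) = 9 * Aw n / INR (2 * n + 2)).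
    { rewrite Aw_S. rewrite !plus_INR, !mult_INR. simpl INR. field.
      pose proof (pos_INR n). lra. }
    rewrite <- E, <- (is_RInt_unique _ _ _ _ HI).
    unfold Bw. apply RInt_le. lra. exists (Bw n); apply Bw_is. exists (9 * Aw n + -9 * Aw (S n)); exact HI.
    intros x Hx. replace (2 * S n)%nat with (2 * n + 2)%nat by lia.
    rewrite pow_add.
    pose proof (x_le_3sin x ltac:(lra)). pose proof (sin2_cos2 x). unfold Rsqr in *.
    pose proof (Hc x).
    assert (x ^ 2 <= 9 * (sin x * sin x)) by (simpl; nra).
    assert (E2: cos x ^ 2 = 1 - sin x * sin x) by (simpl; lra). rewrite E2. nra.
Qed.

Fixpoint Zs (n : nat) : R := match n with 0%nat => 0 | S m => Zs m + / INR (S m) ^ 2 end.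
Fixpoint Os (n : nat) : R := match n with 0%nat => 0 | S m => Os m + / (2 * INR m + 1) ^ 2 end.

Lemma Zs_eq n : Zs n = PI ^ 2 / 6 - 2 * (Bw n / Aw n).
Proof.
  induction n.
  - simpl Zs. rewrite Aw0, Bw0. field. pose proof PI_RGT_0; lra.
  - change (Zs (S n)) with (Zs n + / INR (S n) ^ 2). rewrite IHn.
    pose proof (AB_rec n) as AB. pose proof (Aw_pos n) as Ap. pose proof (Aw_pos (S n)) as Ap'.
    rewrite Aw_S in AB, Ap' |- *.
    assert (Hn : 0 <= INR n) by apply pos_INR.
    rewrite !S_INR, !plus_INR, !mult_INR in *. simpl INR in *.
    assert (Eb : Bw (S n) = ((INR n + 1) * (2 * INR n + 1) * Bw n - (2 * INR n + 1) / (2 * INR n + 2) * Aw n) / (2 * (INR n + 1) ^ 2)).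
    { field_simplify_eq. 2: lra. field_simplify_eq in AB. 2: lra. lra. }
    rewrite Eb. field. split; lra.
Qed.

Lemma Os_eq n : Os n = Zs (2 * n) - Zs n / 4.
Proof.
  induction n.
  - simpl. field.
  - replace (2 * S n)%nat with (S (S (2 * n))) by lia.
    change (Os (S n)) with (Os n + / (2 * INR n + 1) ^ 2).
    change (Zs (S (S (2 * n)))) with (Zs (2 * n) + / INR (S (2 * n)) ^ 2 + / INR (S (S (2 * n))) ^ 2).
    change (Zs (S n)) with (Zs n + / INR (S n) ^ 2). rewrite IHn.
    assert (Hn : 0 <= INR n) by apply pos_INR.
    rewrite !S_INR, !mult_INR. simpl INR. field. lra.
Qed.

Lemma lim_inv1 : is_lim_seq (fun n => / (INR n + 1)) 0.
Proof.
  assert (H := is_lim_seq_inv (fun n => INR n + 1) p_infty).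
  simpl in H. apply H. 2: discriminate.
  apply (is_lim_seq_plus _ _ p_infty 1 p_infty). apply is_lim_seq_INR. apply is_lim_seq_const.
  reflexivity.
Qed.

Lemma Os_lim : is_lim_seq Os (PI ^ 2 / 8).
Proof.
  apply (is_lim_seq_le_le (fun n => PI ^ 2 / 8 - 60 * / (INR n + 1)) _ (fun n => PI ^ 2 / 8 + 60 * / (INR n + 1))).
  - intros n. rewrite Os_eq, !Zs_eq.
    pose proof (Bw_bounds n) as [b1 b2]. pose proof (Bw_bounds (2 * n)) as [c1 c2].
    pose proof (Aw_pos n). pose proof (Aw_pos (2 * n)).
    assert (Hn : 0 <= INR n) by apply pos_INR.
    rewrite !plus_INR, !mult_INR in *. replace (INR 2) with 2 in * by (simpl; ring).
    assert (0 <= Bw n / Aw n <= 9 / (2 * INR n + 2)).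
    { split. apply Rdiv_le_0_compat; lra. apply Rle_div_l. lra. 
      replace (9 / (2 * INR n + 2) * Aw n) with (9 * Aw n / (2 * INR n + 2)) by (field; lra). lra. }
    assert (0 <= Bw (2 * n) / Aw (2 * n) <= 9 / (2 * (2 * INR n) + 2)).
    { split. apply Rdiv_le_0_compat; lra. apply Rle_div_l. lra. 
      replace (9 / (2 * (2 * INR n) + 2) * Aw (2 * n)) with (9 * Aw (2 * n) / (2 * (2 * INR n) + 2)) by (field; lra). lra. }
    assert (9 / (2 * INR n + 2) <= 30 * / (INR n + 1)).
    { apply Rle_div_l. lra. field_simplify; try lra. apply Rle_div_r; lra. }
    assert (9 / (2 * (2 * INR n) + 2) <= 30 * / (INR n + 1)).
    { apply Rle_div_l. lra. field_simplify; try lra. apply Rle_div_r; lra. }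
    split; lra.
  - replace (PI ^ 2 / 8) with (PI ^ 2 / 8 - 60 * 0) at 1 by ring.
    apply is_lim_seq_minus'. apply is_lim_seq_const. apply is_lim_seq_mult'. apply is_lim_seq_const. apply lim_inv1.
  - replace (PI ^ 2 / 8) with (PI ^ 2 / 8 + 60 * 0) at 1 by ring.
    apply is_lim_seq_plus'. apply is_lim_seq_const. apply is_lim_seq_mult'. apply is_lim_seq_const. apply lim_inv1.
Qed.
Definition Cc (k : nat) : R := Binomial.C (2 * k) k.

Lemma fact_pos' k : 0 < INR (Factorial.fact k).
Proof. apply lt_0_INR, Factorial.lt_O_fact. Qed.

Lemma Cc_pos k : 0 < Cc k.
Proof.
  unfold Cc, Binomial.C. replace (2 * k - k)%nat with k by lia.
  pose proof (fact_pos' (2*k)); pose proof (fact_pos' k).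
  apply Rdiv_lt_0_compat; auto. apply Rmult_lt_0_compat; auto.
Qed.

Lemma Cc_S k : Cc (S k) = Cc k * (2 * (2 * INR k + 1) / (INR k + 1)).
Proof.
  unfold Cc, Binomial.C. replace (2 * k - k)%nat with k by lia.
  replace (2 * S k - S k)%nat with (S k) by lia.
  replace (2 * S k)%nat with (S (S (2 * k))) by lia.
  rewrite !fact_simpl. rewrite !mult_INR, !S_INR, !mult_INR.
  pose proof (fact_pos' (2*k)); pose proof (fact_pos' k). pose proof (pos_INR k).
  simpl INR. field. repeat split; lra.
Qed.
Definition Pp y := 3*y^2+5*y+4.
Definition lam y := Pp (y+1) * (2*y+1) / (2*(y+3)*Pp y).
Definition Rc x y := (x-1)*(2*x+3)*(8*x^2 + 4*(y+3)*x + 4 - y - y^2) / (2*(y+3)^2 * Pp y).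
Definition Dn x y := (2*x+2*y+3)*(2*x-1)^2*(2*x+1)*(2*x+3).
Lemma Pp_pos y : 0 <= y -> 0 < Pp y. Proof. intros; unfold Pp; nra. Qed.
Lemma tele_id x y g : 1 <= x -> 0 <= y ->
  x / Dn x (y+1) * (g * ((x+y+2)/(2*(2*x+2*y+3)))) - lam y / 4 * (x / Dn x y * g)
  = / 4 * (Rc (x+1) y * ((x+1) / Dn (x+1) y * (g * (2*(2*x+1)/(x+1)) * ((x+y+2)/(2*(2*x+2*y+3)))))
           - Rc x y * (x / Dn x y * g)).
Proof.
  intros Hx Hy. pose proof (Pp_pos y Hy). pose proof (Pp_pos (y+1) ltac:(lra)).
  unfold lam, Rc, Dn. unfold Pp in *. field. repeat split; try lra; try nra.
Qed.

Lemma sm_eq r n : summand r n = INR n / Dn (INR n) (INR r) * (Cc n / Cc (n + r + 1)).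
Proof.
  unfold summand, Dn, Cc. replace (2 * n + 2 * r + 2)%nat with (2 * (n + r + 1))%nat by lia. reflexivity.
Qed.

Lemma INR_N n r : INR (n + r + 1) = INR n + INR r + 1.
Proof. rewrite !plus_INR. simpl. ring. Qed.

Lemma g_Sr r n : Cc n / Cc (n + S r + 1) = Cc n / Cc (n + r + 1) * ((INR n + INR r + 2) / (2 * (2 * INR n + 2 * INR r + 3))).
Proof.
  replace (n + S r + 1)%nat with (S (n + r + 1)) by lia. rewrite Cc_S, INR_N.
  pose proof (Cc_pos (n + r + 1)). pose proof (Cc_pos n). pose proof (pos_INR n). pose proof (pos_INR r).
  field. repeat split; lra.
Qed.

Lemma g_Sn r n : Cc (S n) / Cc (S n + r + 1) = Cc n / Cc (n + r + 1) * (2 * (2 * INR n + 1) / (INR n + 1)) * ((INR n + INR r + 2) / (2 * (2 * INR n + 2 * INR r + 3))).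
Proof.
  replace (S n + r + 1)%nat with (S (n + r + 1)) by lia. rewrite !Cc_S, INR_N.
  pose proof (Cc_pos (n + r + 1)). pose proof (Cc_pos n). pose proof (pos_INR n). pose proof (pos_INR r).
  field. repeat split; lra.
Qed.

Lemma tele r n : (1 <= n)%nat ->
  summand (S r) n - lam (INR r) / 4 * summand r n
  = / 4 * (Rc (INR (S n)) (INR r) * summand r (S n) - Rc (INR n) (INR r) * summand r n).
Proof.
  intros Hn. rewrite !sm_eq, g_Sr, g_Sn, !S_INR.
  apply tele_id. apply (le_INR 1) in Hn. simpl in Hn. lra. apply pos_INR.
Qed.

Lemma sum_n_0 (a : nat -> R) : sum_n a 0 = a 0%nat.
Proof. rewrite sum_O. reflexivity. Qed.

Lemma sum_n_S (a : nat -> R) M : sum_n a (S M) = sum_n a M + a (S M).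
Proof. rewrite sum_Sn. reflexivity. Qed.


Lemma Sp_rec r M : sum_n (fun k => summand (S r) (S k)) M
  = lam (INR r) / 4 * sum_n (fun k => summand r (S k)) M + / 4 * (Rc (INR (M + 2)) (INR r) * summand r (M + 2)).
Proof.
  assert (R1 : Rc (INR 1) (INR r) = 0) by (unfold Rc; simpl; unfold Rdiv; ring).
  induction M.
  - rewrite !sum_O. pose proof (tele r 1 (le_n 1)) as T. rewrite R1 in T. simpl (0 + 2)%nat. lra.
  - rewrite !sum_n_S, IHM. pose proof (tele r (S (S M)) ltac:(lia)) as T.
    replace (S M + 2)%nat with (S (S (S M))) by lia. replace (M + 2)%nat with (S (S M)) in * by lia.
    lra.
Qed.

Lemma lim_lin (al be ga de : R) : 0 < ga -> 0 < de ->
  is_lim_seq (fun m => (al * INR m + be) / (ga * INR m + de)) (al / ga).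
Proof.
  intros Hg Hd.
  assert (Hu : is_lim_seq (fun m => / (ga * INR m + de)) 0).
  { apply (is_lim_seq_le_le (fun _ => 0) _ (fun m => (/ ga + / de) * / (INR m + 1))).
    - intros m. pose proof (pos_INR m). split.
      + left; apply Rinv_0_lt_compat; nra.
      + assert (HK : 0 < / ga + / de) by (apply Rplus_lt_0_compat; apply Rinv_0_lt_compat; lra).
        replace ((/ ga + / de) * / (INR m + 1)) with (/ ((INR m + 1) / (/ ga + / de))) by (field; lra).
        apply Rinv_le_contravar. apply Rdiv_lt_0_compat; lra.
        apply Rle_div_l. exact HK.
        assert (E : (ga * INR m + de) * (/ ga + / de) = INR m + 1 + de / ga + ga * INR m / de) by (field; lra).
        rewrite E. assert (0 <= de / ga) by (apply Rdiv_le_0_compat; lra).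
        assert (0 <= ga * INR m / de) by (apply Rdiv_le_0_compat; nra). lra.
    - apply is_lim_seq_const.
    - replace 0 with ((/ ga + / de) * 0) by ring. apply is_lim_seq_mult'. apply is_lim_seq_const. exact lim_inv1. }
  apply is_lim_seq_ext with (fun m => al / ga + (be - al * de / ga) * / (ga * INR m + de)).
  - intros m. pose proof (pos_INR m). field. split; nra.
  - assert (L := is_lim_seq_plus' _ _ _ _ (is_lim_seq_const (al/ga)) (is_lim_seq_mult' _ _ _ _ (is_lim_seq_const (be - al*de/ga)) Hu)).
    rewrite Rmult_0_r, Rplus_0_r in L. exact L.
Qed.

Lemma g_lim r : is_lim_seq (fun m => Cc (m + 2) / Cc (m + 2 + r + 1)) (/ 2 ^ (2 * r + 2)).
Proof.
  induction r.
  - apply is_lim_seq_ext with (fun m => (1 * INR m + 3) / (4 * INR m + 10)).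
    + intros m. replace (m + 2 + 0 + 1)%nat with (S (m + 2)) by lia. rewrite Cc_S, plus_INR.
      pose proof (Cc_pos (m + 2)). pose proof (pos_INR m). simpl INR. field. repeat split; lra.
    + replace (/ 2 ^ (2 * 0 + 2)) with (1 / 4) by (simpl; field). apply lim_lin; lra.
  - apply is_lim_seq_ext with (fun m => Cc (m + 2) / Cc (m + 2 + r + 1) * ((1 * INR m + (INR r + 4)) / (4 * INR m + (4 * INR r + 14)))).
    + intros m. rewrite g_Sr, plus_INR. simpl INR. f_equal. field. pose proof (pos_INR m). pose proof (pos_INR r). lra.
    + replace (/ 2 ^ (2 * S r + 2)) with (/ 2 ^ (2 * r + 2) * (1 / 4)).
      2: { replace (2 * S r + 2)%nat with (2 * r + 2 + 2)%nat by lia. rewrite (pow_add 2 (2 * r + 2) 2). simpl (2 ^ 2). field. apply pow_nonzero. lra. }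
      apply is_lim_seq_mult'. exact IHr. apply lim_lin. lra. pose proof (pos_INR r). lra.
Qed.

Lemma tail_lim r : is_lim_seq (fun m => Rc (INR (m + 2)) (INR r) * summand r (m + 2))
  (/ (4 * (INR r + 3) ^ 2 * Pp (INR r)) * / 2 ^ (2 * r + 2)).
Proof.
  set (y := INR r).
  assert (Hy : 0 <= y) by apply pos_INR.
  assert (HP := Pp_pos y Hy).
  set (K := / (2 * (y + 3) ^ 2 * Pp y)).
  assert (La := lim_lin 1 2 2 (2 * y + 7) ltac:(lra) ltac:(lra)).
  assert (Lb := lim_lin 1 1 2 3 ltac:(lra) ltac:(lra)).
  assert (Lc := lim_lin (4 * (y + 3)) (8 * (y + 3) + 6 - y - y ^ 2) 2 3 ltac:(lra) ltac:(lra)).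
  assert (Ld := lim_lin 0 1 2 5 ltac:(lra) ltac:(lra)).
  assert (Lg := g_lim r).
  assert (L := is_lim_seq_mult' _ _ _ _ (is_lim_seq_mult' _ _ _ _ (is_lim_seq_const K)
     (is_lim_seq_mult' _ _ _ _ (is_lim_seq_mult' _ _ _ _ La Lb)
        (is_lim_seq_plus' _ _ _ _ (is_lim_seq_const 2) (is_lim_seq_mult' _ _ _ _ Lc Ld)))) Lg).
  replace (/ (4 * (y + 3) ^ 2 * Pp y) * / 2 ^ (2 * r + 2)) with
     (K * (1 / 2 * (1 / 2) * (2 + 4 * (y + 3) / 2 * (0 / 2))) * / 2 ^ (2 * r + 2)).
  2: { unfold K. field. split. apply pow_nonzero; lra. split; lra. }
  revert L. apply is_lim_seq_ext. intros m.
  rewrite sm_eq. unfold Rc, Dn. fold y.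
  assert (Hm : 0 <= INR m) by apply pos_INR.
  rewrite plus_INR. replace (INR 2) with 2 by (simpl; ring). unfold K.
  pose proof (Cc_pos (m + 2)). pose proof (Cc_pos (m + 2 + r + 1)).
  field. repeat split; try lra; nra.
Qed.

Lemma step r T : is_series (fun k => summand r (S k)) T ->
  is_series (fun k => summand (S r) (S k))
    (lam (INR r) / 4 * T + / 4 * (/ (4 * (INR r + 3) ^ 2 * Pp (INR r)) * / 2 ^ (2 * r + 2))).
Proof.
  intros H. assert (H' : is_lim_seq (sum_n (fun k => summand r (S k))) T) by exact H.
  assert (L := is_lim_seq_plus' _ _ _ _ (is_lim_seq_mult' _ _ _ _ (is_lim_seq_const (lam (INR r) / 4)) H')
     (is_lim_seq_mult' _ _ _ _ (is_lim_seq_const (/ 4)) (tail_lim r))).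
  assert (L' : is_lim_seq (sum_n (fun k => summand (S r) (S k)))
    (lam (INR r) / 4 * T + / 4 * (/ (4 * (INR r + 3) ^ 2 * Pp (INR r)) * / 2 ^ (2 * r + 2)))).
  { revert L. apply is_lim_seq_ext. intros M. rewrite Sp_rec. reflexivity. }
  exact L'.
Qed.

Definition Tt (r : nat) : R :=
  / 2 ^ (2 * r + 2)%nat *
      ((8 * wp (2 * r + 4)%nat - 8 * wp (2 * r + 2)%nat + 3 * wp (2 * r)%nat) / 128
       + 6 / (128 * (4 + 2 * INR r)) - 3 / (128 * (2 + 2 * INR r))).

Lemma wp0 : wp 0 = PI ^ 2 / 8.
Proof.
  assert (H := int_id2 (fun x => x ^ 2 / 2) _ _ 0 (PI/2) 1 0 (PI^2/8) _ _ (wp_is 0) (wp_is 0)).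
  rewrite <- H. ring.
  - intros x. auto_derive; auto. simpl. field.
  - intros x; auto_derive; auto.
  - field.
Qed.

Lemma wp_rec' q : wp (q + 2) = (INR (q + 1) * wp q + / INR (q + 2)) / INR (q + 2).
Proof.
  pose proof (wp_rec q) as H. replace (q + 2)%nat with (S (S q)) by lia. replace (q + 1)%nat with (S q) by lia.
  assert (INR (S (S q)) <> 0) by (apply not_0_INR; lia).
  rewrite <- H. field. auto.
Qed.

Lemma T_step r : Tt (S r) = lam (INR r) / 4 * Tt r + / 4 * (/ (4 * (INR r + 3) ^ 2 * Pp (INR r)) * / 2 ^ (2 * r + 2)).
Proof.
  unfold Tt.
  replace (2 * S r + 4)%nat with (2 * r + 4 + 2)%nat by lia.
  replace (2 * S r + 2)%nat with (2 * r + 2 + 2)%nat by lia.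
  replace (2 * S r)%nat with (2 * r + 2)%nat by lia.
  replace (2 * r + 4)%nat with (2 * r + 2 + 2)%nat by lia.
  rewrite (wp_rec' (2 * r + 2 + 2)), (wp_rec' (2 * r + 2)), (wp_rec' (2 * r)).
  replace (2 * r + 2 + 2 + 2)%nat with (2 * r + 2 + 2 + 2)%nat by reflexivity.
  rewrite (pow_add 2 (2 * r + 2) 2).
  set (w := wp (2 * r)). set (p := 2 ^ (2 * r + 2)).
  assert (Hp : p <> 0) by (apply pow_nonzero; lra).
  rewrite !plus_INR, !mult_INR, !S_INR. simpl INR.
  assert (Hy : 0 <= INR r) by apply pos_INR.
  pose proof (Pp_pos (INR r) Hy). unfold lam. unfold Pp in *.
  field. repeat split; try lra; nra.
Qed.

Lemma sm0 n : summand 0 n = INR n / Dn (INR n) 0 * ((INR n + 1) / (2 * (2 * INR n + 1))).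
Proof.
  rewrite sm_eq. replace (n + 0 + 1)%nat with (S n) by lia. rewrite Cc_S.
  replace (INR 0) with 0 by reflexivity.
  pose proof (Cc_pos n). pose proof (pos_INR n). f_equal. field. lra.
Qed.

Definition Eb (m : R) : R :=
  / 2 * (3 / 64 * (/ (2 * m + 3) ^ 2 + / (2 * m + 5) ^ 2) - / 16 * / (2 * m + 3) ^ 2
         + / 128 * (/ (2 * m + 3) + / (2 * m + 5))).

Lemma Sp0 M : @eq R (sum_n (fun k => summand 0 (S k)) M) ((Os (S M) / 64 + Eb (INR M)) / 4).
Proof.
  induction M.
  - rewrite sum_n_0, sm0. unfold Eb, Dn. simpl Os. simpl INR. field.
  - rewrite sum_n_S, IHM, sm0.
    change (Os (S (S M))) with (Os (S M) + / (2 * INR (S M) + 1) ^ 2).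
    unfold Eb, Dn. rewrite !S_INR. assert (0 <= INR M) by apply pos_INR.
    field. repeat split; lra.
Qed.

Lemma Eb_lim : is_lim_seq (fun m => Eb (INR m)) 0.
Proof.
  assert (L3 := lim_lin 0 1 2 3 ltac:(lra) ltac:(lra)).
  assert (L5 := lim_lin 0 1 2 5 ltac:(lra) ltac:(lra)).
  assert (L := is_lim_seq_mult' _ _ _ _ (is_lim_seq_const (/ 2))
    (is_lim_seq_plus' _ _ _ _
      (is_lim_seq_minus' _ _ _ _
        (is_lim_seq_mult' _ _ _ _ (is_lim_seq_const (3 / 64))
           (is_lim_seq_plus' _ _ _ _ (is_lim_seq_mult' _ _ _ _ L3 L3) (is_lim_seq_mult' _ _ _ _ L5 L5)))
        (is_lim_seq_mult' _ _ _ _ (is_lim_seq_const (/ 16)) (is_lim_seq_mult' _ _ _ _ L3 L3)))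
      (is_lim_seq_mult' _ _ _ _ (is_lim_seq_const (/ 128)) (is_lim_seq_plus' _ _ _ _ L3 L5)))).
  replace 0 with (/ 2 * (3 / 64 * (0 / 2 * (0 / 2) + 0 / 2 * (0 / 2)) - / 16 * (0 / 2 * (0 / 2)) + / 128 * (0 / 2 + 0 / 2))) by field.
  revert L. apply is_lim_seq_ext. intros m. unfold Eb. pose proof (pos_INR m).
  field. split; lra.
Qed.

Lemma base : is_series (fun k => summand 0 (S k)) (Tt 0).
Proof.
  assert (E : Tt 0 = (PI ^ 2 / 8 / 64 + 0) / 4).
  { unfold Tt. simpl (2 * 0 + 4)%nat. simpl (2 * 0 + 2)%nat. simpl (2 * 0)%nat.
    replace 4%nat with (2 + 2)%nat by reflexivity. rewrite (wp_rec' 2).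
    replace 2%nat with (0 + 2)%nat by reflexivity. rewrite (wp_rec' 0). rewrite wp0.
    simpl. field. }
  rewrite E.
  assert (LO : is_lim_seq (fun M => Os (S M)) (PI ^ 2 / 8)) by (apply (is_lim_seq_incr_1 Os); exact Os_lim).
  assert (L := is_lim_seq_mult' _ _ _ _ (is_lim_seq_plus' _ _ _ _ (is_lim_seq_mult' _ _ _ _ LO (is_lim_seq_const (/ 64))) Eb_lim) (is_lim_seq_const (/ 4))).
  assert (L' : is_lim_seq (sum_n (fun k => summand 0 (S k))) ((PI ^ 2 / 8 / 64 + 0) / 4)).
  { revert L. apply is_lim_seq_ext. intros M. rewrite Sp0. reflexivity. }
  exact L'.
Qed.

Theorem theorem5p0p2 (r : nat) :
  is_series (fun k : nat => summand r (S k))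
    (/ 2 ^ (2 * r + 2)%nat *
      ((8 * wp (2 * r + 4)%nat - 8 * wp (2 * r + 2)%nat + 3 * wp (2 * r)%nat) / 128
       + 6 / (128 * (4 + 2 * INR r)) - 3 / (128 * (2 + 2 * INR r)))).
Proof.
  change (is_series (fun k : nat => summand r (S k)) (Tt r)).
  induction r.
  - exact base.
  - rewrite T_step. apply step. exact IHr.
Qed.
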